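(* For every complex number $a$ of modulus one, there is no $6\times 6$ complex Hadamard matrix all of whose entries lie in $\{1,a,-\bar a\}$.
   Context: A complex Hadamard matrix (CHM) of order $n$ is an $n\times n$ complex matrix $H$ all of whose entries have modulus one and which satisfies $HH^\dagger=nI$. *)

(* Defs.v *)
From HB Require Import structures.
From mathcomp Require Import all_boot all_order all_algebra.
Set Implicit Arguments. Unset Strict Implicit. Unset Printing Implicit Defensive.
Import Order.TTheory GRing.Theory Num.Theory.
Local Open Scope ring_scope.

Definition conj_tr (C : numClosedFieldType) (n : nat) (H : 'M[C]_n) : 'M[C]_n :=
  (map_mx (@Num.conj C) H)^T.

Definition complex_hadamard (C : numClosedFieldType) (n : nat) (H : 'M[C]_n) : Prop :=
  (forall i j, `|H i j| = 1) /\ H *m conj_tr H = (n%:R)%:M.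

(* Main.v *)
Require Import Defs.
From HB Require Import structures.
From Stdlib Require Import ZArith Lia.
From mathcomp Require Import all_boot all_order all_algebra ssrZ.
From mathcomp Require Import ring lra.
Import Order.TTheory GRing.Theory Num.Theory.
Local Open Scope ring_scope.

Definition zC (C : numClosedFieldType) (z : Z) : C := (int_of_Z z)%:~R.
Lemma zCD (C : numClosedFieldType) x y : zC C (Z.add x y) = zC C x + zC C y.
Proof. by rewrite /zC -intrD -raddfD. Qed.
Lemma zCM (C : numClosedFieldType) x y : zC C (Z.mul x y) = zC C x * zC C y.
Proof. by rewrite /zC -intrM -rmorphM. Qed.
Lemma zCN (C : numClosedFieldType) x : zC C (Z.opp x) = - zC C x.
Proof. by rewrite /zC -mulrNz -raddfN. Qed.
Lemma zCB (C : numClosedFieldType) x y : zC C (Z.sub x y) = zC C x - zC C y.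
Proof. by rewrite /zC -intrB -raddfB. Qed.
Lemma zC_eq0 (C : numClosedFieldType) x : zC C x = 0 -> x = Z0.
Proof. rewrite /zC => /eqP; rewrite intr_eq0 => /eqP h.
by rewrite -(int_of_ZK x) h. Qed.
Lemma zCpos (C : numClosedFieldType) p : zC C (Zpos p) = (Pos.to_nat p)%:R.
Proof. by []. Qed.
Lemma zCneg (C : numClosedFieldType) p : zC C (Zneg p) = - (Pos.to_nat p)%:R.
Proof.
rewrite /zC /=; have := Pos2Nat.is_pos p; case: (Pos.to_nat p) => [|n] h; first by exfalso; lia.
by rewrite /= NegzE mulrNz. Qed.
Lemma zC0 (C : numClosedFieldType) : zC C Z0 = 0. Proof. by []. Qed.

Local Close Scope ring_scope.
Local Open Scope Z_scope.
Definition T3 := (Z * Z * Z)%type.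
Definition addP (P Q : T3) : T3 := (P.1.1 + Q.1.1, P.1.2 + Q.1.2, P.2 + Q.2).
Definition pairI (x y : nat) : T3 :=
  match x, y with
  | 0%nat,0%nat | 1%nat,1%nat | 2%nat,2%nat => (2,0,0)
  | 0%nat,1%nat | 1%nat,0%nat => (0,1,0)
  | 0%nat,2%nat | 2%nat,0%nat => (0,-1,0)
  | 1%nat,2%nat | 2%nat,1%nat => (2,0,-1)
  | _,_ => (0,0,0) end.
Definition pairII (x y : nat) : T3 :=
  match x, y with
  | 0%nat,1%nat | 0%nat,2%nat => (-1,0,0)
  | 1%nat,0%nat | 2%nat,0%nat => (1,0,0)
  | 1%nat,2%nat => (0,-1,0)
  | 2%nat,1%nat => (0,1,0)
  | _,_ => (0,0,0) end.
Fixpoint coefs (f : nat -> nat -> T3) (r s : seq nat) : T3 :=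
  match r, s with
  | x :: r', y :: s' => addP (f x y) (coefs f r' s')
  | _, _ => (0,0,0) end.
Definition okP (P m : T3) : bool :=
  if negb (m.2 =? 0) then
    let al := m.2 * P.1.2 - P.2 * m.1.2 in let be := m.2 * P.1.1 - P.2 * m.1.1 in
    if al =? 0 then be =? 0 else m.2 * be * be - m.1.2 * al * be + m.1.1 * al * al =? 0
  else P.2 * m.1.1 * m.1.1 - P.1.2 * m.1.1 * m.1.2 + P.1.1 * m.1.2 * m.1.2 =? 0.
Definition triv (P : T3) : bool := (P.1.1 =? 0) && (P.1.2 =? 0) && (P.2 =? 0).
Definition constnz (P : T3) : bool := negb (P.1.1 =? 0) && (P.1.2 =? 0) && (P.2 =? 0).
Definition prop (P Q : T3) : bool :=
  (P.1.1 * Q.1.2 =? P.1.2 * Q.1.1) && (P.1.1 * Q.2 =? P.2 * Q.1.1) && (P.1.2 * Q.2 =? P.2 * Q.1.2).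
Definition mulL (m n : T3) : T3 := (m.1.1 * n.1.1, m.1.1 * n.1.2 + m.1.2 * n.1.1, m.1.2 * n.1.2).
Definition lin (m : T3) : bool := m.2 =? 0.
Definition Mg : seq (T3 * bool) :=
  [:: ((0,1,0),false); ((-1,1,0),false); ((1,1,0),false); ((-2,1,0),true); ((2,1,0),true);
      ((-3,2,0),false); ((3,2,0),false); ((-2,0,1),false); ((-3,0,1),false);
      ((-2,2,1),false); ((-2,-2,1),false); ((-4,1,1),false); ((-4,-1,1),false);
      ((-4,1,2),false); ((-4,-1,2),false)].
Definition Mb : seq T3 := [:: (-3,1,0); (3,1,0); (-4,1,0); (4,1,0); (-6,0,1)].
Definition ML : seq T3 := map fst Mg ++ Mb.
Definition MLlin : seq T3 := filter lin ML.
Definition cert (I II : T3) : bool :=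
  if triv I && triv II then true else
  if constnz II then true else
  if constnz I then true else
  if negb (okP I II) then true else
  if negb (triv II) && has (prop II) ML then true else
  if negb (triv I) && has (prop I) ML then true else
  negb (triv I) && has (fun m => has (fun n => prop I (mulL m n)) MLlin) MLlin.
Definition adjm (m : T3) (isreal : bool) (r s : seq nat) : bool :=
  okP (coefs pairI r s) m && (isreal || okP (coefs pairII r s) m).
Fixpoint cods (n : nat) : seq (seq nat) :=
  match n with O => [:: [::]] | S n' =>
   flatten [seq [seq x :: l | l <- cods n'] | x <- [:: 0; 1; 2]%nat] end.
Definition allcodes := cods 6.
Fixpoint rowsOf (adj : seq nat -> seq nat -> bool) (vs : seq (seq nat)) : seq (seq bool) :=
  match vs with [::] => [::] | v :: vs' => map (adj v) vs' :: rowsOf adj vs' end.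
Fixpoint zipand (m r : seq bool) : seq bool :=
  match m, r with b :: m', c :: r' => (b && c) :: zipand m' r' | _, _ => [::] end.
Fixpoint cf (rows : seq (seq bool)) (k : nat) (mask : seq bool) {struct rows} : bool :=
  match k with O => false | S k' =>
  match mask, rows with
  | b :: mask', r :: rows' => (if b then cf rows' k' (zipand mask' r) else true) && cf rows' k mask'
  | _, _ => true end end.
Definition goodgraph (m : T3) (isreal : bool) : bool :=
  all (fun v => negb (adjm m isreal v v)) allcodes &&
  cf (rowsOf (adjm m isreal) allcodes) 6 (nseq (size allcodes) true).
Definition certall : bool :=
  all (fun r => all (fun s => cert (coefs pairI r s) (coefs pairII r s)) allcodes) allcodes.
Lemma certall_ok : certall = true. Proof. vm_compute; reflexivity. Qed.
Lemma graphs_ok : all (fun p => goodgraph p.1 p.2) Mg = true.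
Proof. vm_compute; reflexivity. Qed.
Lemma size_allcodes : size allcodes = 729%nat. Proof. by vm_compute. Qed.
Local Close Scope Z_scope.
Local Open Scope ring_scope.


Definition ev (C : numClosedFieldType) (P : T3) (t : C) : C :=
  zC C P.1.1 + zC C P.1.2 * t + zC C P.2 * t ^+ 2.

Arguments ev {C}.
Lemma evD (C : numClosedFieldType) P Q (t : C) : ev (addP P Q) t = ev P t + ev Q t.
Proof. rewrite /ev /addP /= !zCD; ring. Qed.

Lemma zCE (C : numClosedFieldType) x y : zC C x = zC C y -> x = y.
Proof. move=> h; have : zC C (Z.sub x y) = 0 by rewrite zCB h subrr.
move/zC_eq0; lia. Qed.

Lemma okP_sound (C : numClosedFieldType) P m (t : C) :
  ev P t = 0 -> ev m t = 0 -> okP P m.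
Proof.
case: P => [[p0 p1] p2]; case: m => [[m0 m1] m2]; rewrite /ev /okP /= => hP hm.
case h2: (Z.eqb m2 Z0) => /=.
  move/Z.eqb_eq: h2 => h2; subst m2.
  apply/Z.eqb_eq/(@zC_eq0 C _); rewrite !(zCD, zCB, zCM).
  have hm' : zC C m0 = - (zC C m1 * t) by move: hm; rewrite zC0 mul0r addr0 => /eqP; rewrite addr_eq0 => /eqP.
  rewrite hm'; transitivity (zC C m1 ^+ 2 * (zC C p0 + zC C p1 * t + zC C p2 * t ^+ 2)); first ring.
  by rewrite hP mulr0.
have key : zC C (Z.sub (Z.mul m2 p1) (Z.mul p2 m1)) * t + zC C (Z.sub (Z.mul m2 p0) (Z.mul p2 m0))
   = zC C m2 * (zC C p0 + zC C p1 * t + zC C p2 * t ^+ 2) - zC C p2 * (zC C m0 + zC C m1 * t + zC C m2 * t ^+ 2).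
  rewrite !(zCB, zCM); ring.
rewrite hP hm !mulr0 subrr in key.
case ha: (Z.eqb _ Z0).
  move/Z.eqb_eq: ha => ha; rewrite ha zC0 mul0r add0r in key.
  by apply/Z.eqb_eq/(@zC_eq0 C _).
apply/Z.eqb_eq/(@zC_eq0 C _).
set al := Z.sub _ _ in key *; set be := Z.sub _ _ in key *.
have hb : zC C be = - (zC C al * t) by move/eqP: key; rewrite addrC addr_eq0 => /eqP.
clearbody al be; rewrite !(zCD, zCB, zCM) hb.
transitivity (zC C al ^+ 2 * (zC C m0 + zC C m1 * t + zC C m2 * t ^+ 2)); first ring.
by rewrite hm mulr0.
Qed.

Lemma zCeq (C : numClosedFieldType) (x y : Z) : Z.eqb x y -> zC C x = zC C y.
Proof. by move/Z.eqb_eq->. Qed.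

Lemma prop_sound (C : numClosedFieldType) P Q (t : C) :
  prop P Q -> ~~ triv P -> ev P t = 0 -> ev Q t = 0.
Proof.
case: P => [[p0 p1] p2]; case: Q => [[q0 q1] q2]; rewrite /prop /triv /ev /=.
move=> /andP[/andP[e01 e02] e12] nt hP.
have {}e01 := @zCeq C _ _ e01; have {}e02 := @zCeq C _ _ e02; have {}e12 := @zCeq C _ _ e12.
rewrite !zCM in e01 e02 e12.
case h0: (Z.eqb p0 Z0) nt => /=.
  move/Z.eqb_eq: h0 => h0; subst p0.
  case h1: (Z.eqb p1 Z0) => /=.
    move/Z.eqb_eq: h1 => h1; subst p1.
    case h2: (Z.eqb p2 Z0) => //= _.
    have nz : zC C p2 != 0 by apply/eqP => /zC_eq0 /Z.eqb_eq; rewrite h2.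
    apply/eqP; rewrite -(mulrI_eq0 _ (mulfI nz)); apply/eqP.
    transitivity (zC C q2 * (zC C Z0 + zC C Z0 * t + zC C p2 * t ^+ 2)
      + (zC C p2 * zC C q0 - zC C Z0 * zC C q2) + (zC C p2 * zC C q1 - zC C Z0 * zC C q2) * t); first by rewrite !zC0; ring.
    by rewrite hP -e02 -e12; ring.
  move=> _.
  have nz : zC C p1 != 0 by apply/eqP => /zC_eq0 /Z.eqb_eq; rewrite h1.
  apply/eqP; rewrite -(mulrI_eq0 _ (mulfI nz)); apply/eqP.
  transitivity (zC C q1 * (zC C Z0 + zC C p1 * t + zC C p2 * t ^+ 2)
      + (zC C p1 * zC C q0 - zC C Z0 * zC C q1) + (zC C p1 * zC C q2 - zC C p2 * zC C q1) * t ^+ 2); first by rewrite !zC0; ring.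
  by rewrite hP -e01 -e12; ring.
move=> _.
have nz : zC C p0 != 0 by apply/eqP => /zC_eq0 /Z.eqb_eq; rewrite h0.
apply/eqP; rewrite -(mulrI_eq0 _ (mulfI nz)); apply/eqP.
transitivity (zC C q0 * (zC C p0 + zC C p1 * t + zC C p2 * t ^+ 2)
   + (zC C p0 * zC C q1 - zC C p1 * zC C q0) * t + (zC C p0 * zC C q2 - zC C p2 * zC C q0) * t ^+ 2); first ring.
by rewrite hP e01 e02; ring.
Qed.

Lemma mulL_ev (C : numClosedFieldType) m n (t : C) :
  lin m -> lin n -> ev (mulL m n) t = ev m t * ev n t.
Proof.
case: m => [[m0 m1] m2]; case: n => [[n0 n1] n2]; rewrite /lin /ev /mulL /=.
move=> /Z.eqb_eq -> /Z.eqb_eq ->; rewrite !(zCD, zCM) zC0; ring.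
Qed.

Lemma constnz_sound (C : numClosedFieldType) P (t : C) : constnz P -> ev P t = 0 -> False.
Proof.
case: P => [[p0 p1] p2]; rewrite /constnz /ev /=.
case h0: (Z.eqb p0 Z0) => //= /andP[/Z.eqb_eq -> /Z.eqb_eq ->].
rewrite zC0 !mul0r !addr0 => /zC_eq0 /Z.eqb_eq; by rewrite h0.
Qed.

Lemma cert_sound (C : numClosedFieldType) I II (t : C) :
  cert I II -> ~~ (triv I && triv II) -> ev I t = 0 -> ev II t = 0 ->
  exists2 m, m \in ML & ev m t = 0.
Proof.
rewrite /cert => hc nt hI hII.
move: hc; rewrite (negbTE nt).
case: ifP => [c _|_]; first by case: (constnz_sound C II t c hII).
case: ifP => [c _|_]; first by case: (constnz_sound C I t c hI).
case: ifP => [c _|_]; first by rewrite (okP_sound C I II t hI hII) in c.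
case: ifP => [/andP[ntII /hasP[m mM pm]] _|_].
  by exists m => //; apply: (prop_sound C II m t pm ntII hII).
case: ifP => [/andP[ntI /hasP[m mM pm]] _|_].
  by exists m => //; apply: (prop_sound C I m t pm ntI hI).
case/andP => ntI /hasP[m mM /hasP[n nM pmn]].
move: mM nM; rewrite !mem_filter => /andP[lm mM] /andP[ln nM].
have := prop_sound C _ _ t pmn ntI hI; rewrite mulL_ev // => /eqP; rewrite mulf_eq0 => /orP[]/eqP h.
  by exists m.
by exists n.
Qed.


Definition vl (C : numClosedFieldType) (a : C) (k : nat) : C := nth 0 [:: 1; a; - a^*] k.

Arguments vl {C}.
Lemma pairP (C : numClosedFieldType) (a : C) x y : a * a^* = 1 -> (x < 3)%N -> (y < 3)%N ->
  vl a x * (vl a y)^* + (vl a x * (vl a y)^*)^* = ev (pairI x y) (a + a^*) /\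
  vl a x * (vl a y)^* - (vl a x * (vl a y)^*)^* = (a - a^*) * ev (pairII x y) (a + a^*).
Proof.
move=> aa.
have a0 : a != 0 by apply/eqP => a0; move: aa; rewrite a0 mul0r => /eqP; rewrite eq_sym oner_eq0.
have hb : a^* = a^-1 by rewrite -[a^*]mul1r -(mulVf a0) -mulrA aa mulr1.
case: x => [|[|[|]]] //; case: y => [|[|[|]]] // _ _;
  rewrite /vl /ev /= ?rmorphM ?rmorphN ?rmorph1 /= ?conjCK hb /zC; split; field.
all: exact: a0.
Qed.

Lemma ev0 (C : numClosedFieldType) (t : C) : ev (Z0, Z0, Z0) t = 0.
Proof. by rewrite /ev /= !zC0 !mul0r !addr0. Qed.

Lemma coefs_sum (C : numClosedFieldType) (a : C) (T : Type) (e : seq T) (f h : T -> nat) :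
  a * a^* = 1 -> (forall k, (f k < 3)%N) -> (forall k, (h k < 3)%N) ->
  ev (coefs pairI (map f e) (map h e)) (a + a^*) =
    \sum_(k <- e) (vl a (f k) * (vl a (h k))^* + (vl a (f k) * (vl a (h k))^*)^*) /\
  (a - a^*) * ev (coefs pairII (map f e) (map h e)) (a + a^*) =
    \sum_(k <- e) (vl a (f k) * (vl a (h k))^* - (vl a (f k) * (vl a (h k))^*)^*).
Proof.
move=> aa hf hh; elim: e => [|k e [IH1 IH2]]; first by rewrite /= !big_nil ev0 mulr0.
rewrite /= !big_cons !evD mulrDr IH1 IH2.
by have [-> ->] := pairP C a _ _ aa (hf k) (hh k).
Qed.
Search index_enum size.

Local Close Scope ring_scope.

Fixpoint sel (m : seq bool) (vs : seq (seq nat)) : seq (seq nat) :=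
  match m, vs with b :: m', v :: vs' => if b then v :: sel m' vs' else sel m' vs' | _, _ => [::] end.

Lemma sel_zipand (f : seq nat -> bool) m vs x :
  x \in sel m vs -> f x -> x \in sel (zipand m (map f vs)) vs.
Proof.
elim: vs m => [|v vs IH] [|b m] //=.
case: b => /=; last by move=> hx fx; apply: IH.
rewrite inE => /orP[/eqP -> fx|hx fx]; first by rewrite fx inE eqxx.
case: (f v) => /=; first by rewrite inE (IH _ hx fx) orbT.
exact: IH.
Qed.

Lemma cf_sound (adj : seq nat -> seq nat -> bool) vs k m (S : seq (seq nat)) :
  uniq S -> {subset S <= sel m vs} ->
  (forall x y, x \in S -> y \in S -> x != y -> adj x y) ->
  (k <= size S)%N -> cf (rowsOf adj vs) k m = false.
Proof.
elim: vs k m S => [|v vs IH] [|k] m S uS sS aS kS //=.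
  by case: S uS sS aS kS => [|x S] // _ sS; have := sS x (mem_head _ _); case: m {sS}.
case: m sS => [|b m] sS.
  by case: S uS aS kS sS => [|x S] // _ _ _ sS; have := sS x (mem_head _ _).
have [vS|vS] := boolP (b && (v \in S)).
  case/andP: vS => bt vS; rewrite bt /=.
  rewrite (IH k _ (rem v S)) //.
  - exact: rem_uniq.
  - move=> x; rewrite (mem_rem_uniq _ uS) inE => /andP[xv xS].
    have := sS x xS; rewrite bt /= inE (negbTE xv) /= => xs.
    apply: sel_zipand xs _; apply: aS => //; by rewrite eq_sym.
  - move=> x y; rewrite !(mem_rem_uniq _ uS) !inE => /andP[_ xS] /andP[_ yS]; exact: aS.
  by rewrite size_rem // -ltnS (leq_trans kS) // -(ltn_predK kS) /=.
rewrite (IH k.+1 m S) ?andbF //.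
move=> x xS; have := sS x xS; move: vS sS; case: b => /= vS sS; last by [].
by rewrite inE; case: eqP => [xv|] //; rewrite -xv xS in vS.
Qed.

Local Open Scope ring_scope.

Lemma sel_true vs : sel (nseq (size vs) true) vs = vs.
Proof. by elim: vs => //= v vs ->. Qed.

Lemma mem_cods n l : size l = n -> all (fun x => x < 3)%N l -> l \in cods n.
Proof.
elim: n l => [|n IH] [|x l] //= [sl] /andP[x3 al].
have hl := IH l sl al.
rewrite mem_cat; case: x x3 => [|[|[|]]] // _.
- by rewrite (map_f (cons 0%N) hl).
- by rewrite mem_cat (map_f (cons 1%N) hl) orbT.
- by rewrite !mem_cat (map_f (cons 2%N) hl) !orbT.
Qed.

Lemma triv_ok P m : triv P -> okP P m.
Proof.
case: P => [[p0 p1] p2]; case: m => [[m0 m1] m2]; rewrite /triv /okP /=.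
move=> /andP[/andP[/Z.eqb_eq -> /Z.eqb_eq ->] /Z.eqb_eq ->].
case: ifP => _; [case: ifP => _ |]; apply/Z.eqb_eq; lia.
Qed.

Lemma final (m : T3) (b : bool) (r : 'I_6 -> seq nat) :
  goodgraph m b -> (forall i, r i \in allcodes) ->
  (forall i j, i != j -> adjm m b (r i) (r j)) -> False.
Proof.
case/andP => irr cfok hr adj.
have rinj : injective r.
  move=> i j e; apply/eqP; apply/negP => /negP ij.
  by have := adj i j ij; rewrite e (negbTE (allP irr _ (hr j))).
suff : cf (rowsOf (adjm m b) allcodes) 6 (nseq (size allcodes) true) = false by rewrite cfok.
apply: (cf_sound _ _ _ _ (map r (enum 'I_6))).
- by rewrite map_inj_uniq // enum_uniq.
- by move=> x /mapP[i _ ->]; rewrite sel_true.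
- move=> x y /mapP[i _ ->] /mapP[j _ ->] ne; apply: adj; apply: contraNneq ne => ->.
  by [].
- by rewrite size_map size_enum_ord.
Qed.

Lemma zC1 (C : numClosedFieldType) : zC C (Zpos 1) = 1. Proof. by []. Qed.
Lemma zCnat (C : numClosedFieldType) n : zC C (Z.of_nat n) = n%:R.
Proof. case: n => // n; rewrite /zC /= SuccNat2Pos.id_succ //. Qed.
Lemma zCnnat (C : numClosedFieldType) n : zC C (Z.opp (Z.of_nat n)) = - n%:R.
Proof. by rewrite zCN zCnat. Qed.

Lemma Mb_false (C : numClosedFieldType) (t : C) m : `|t| <= 2 -> m \in Mb -> ev m t = 0 -> False.
Proof.
move=> ht; rewrite !inE => /orP[/eqP->|/orP[/eqP->|/orP[/eqP->|/orP[/eqP->|/eqP->]]]];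
  rewrite /ev /= zC0 zC1 mul0r addr0 ?mul1r.
- rewrite -[Zneg 3]/(Z.opp (Z.of_nat 3)) zCnnat => /eqP; rewrite addrC subr_eq0 => /eqP ht3.
  by move: ht; rewrite ht3 normr_nat ler_nat.
- rewrite -[Zpos 3]/(Z.of_nat 3) zCnat => /eqP; rewrite addrC addr_eq0 => /eqP ht3.
  by move: ht; rewrite ht3 normrN normr_nat ler_nat.
- rewrite -[Zneg 4]/(Z.opp (Z.of_nat 4)) zCnnat => /eqP; rewrite addrC subr_eq0 => /eqP ht3.
  by move: ht; rewrite ht3 normr_nat ler_nat.
- rewrite -[Zpos 4]/(Z.of_nat 4) zCnat => /eqP; rewrite addrC addr_eq0 => /eqP ht3.
  by move: ht; rewrite ht3 normrN normr_nat ler_nat.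
- rewrite -[Zneg 6]/(Z.opp (Z.of_nat 6)) zCnnat => /eqP; rewrite addrC subr_eq0 => /eqP ht6.
  have h1 : `|t| ^+ 2 = 6%:R by rewrite -normrX ht6 normr_nat.
  have h2 : `|t| ^+ 2 <= 2 ^+ 2 by rewrite lerXn2r // nnegrE.
  by move: h2; rewrite h1 -natrX ler_nat.
Qed.


Theorem mainTheorem10 (C : numClosedFieldType) (a : C) :
  `|a| = 1 ->
  ~ (exists H : 'M[C]_6,
        complex_hadamard H /\ (forall i j, H i j \in [:: 1; a; - a^*])).
Proof.
move=> na [H [[_ hH] hent]].
have aa : a * a^* = 1 by rewrite -normCK na expr1n.
have orth (i j : 'I_6) : i != j -> \sum_(k < 6) H i k * (H j k)^* = 0.
  move=> ij.
  have e' : \sum_(k < 6) H i k * (H j k)^* = (H *m conj_tr H) i j.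
    by rewrite mxE; apply: eq_bigr => k _; rewrite /conj_tr !mxE.
  by rewrite e' hH mxE (negbTE ij) mulr0n.
pose c i j := index (H i j) [:: 1; a; - a^*].
have cl i j : (c i j < 3)%N by rewrite /c -[3%N]/(size [:: 1; a; - a^*]) index_mem.
have cv i j : vl a (c i j) = H i j by rewrite /vl /c nth_index.
pose r i := map (c i) (index_enum 'I_6).
have rA i : r i \in allcodes.
  apply: mem_cods; first by rewrite size_map /index_enum; unlock; rewrite -enumT size_enum_ord.
  by apply/allP => x /mapP[k _ ->].
set t := a + a^*.
have hI (i j : 'I_6) : i != j -> ev (coefs pairI (r i) (r j)) t = 0 /\
    (a != a^* -> ev (coefs pairII (r i) (r j)) t = 0).
  move=> ij; have [e1 e2] := coefs_sum C a _ (index_enum 'I_6) (c i) (c j) aa (cl i) (cl j).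
  have s0 : \sum_(k < 6) vl a (c i k) * (vl a (c j k))^* = 0.
    rewrite -[RHS](orth i j ij); apply: eq_bigr => k _; by rewrite !cv.
  split.
    by rewrite /t e1 big_split /= -rmorph_sum s0 rmorph0 addr0.
  move=> aneq.
  have hm : (a - a^*) * ev (coefs pairII (r i) (r j)) t = 0.
    by rewrite /t e2 sumrB -rmorph_sum s0 rmorph0 subr0.
  by move/eqP: hm; rewrite mulf_eq0 subr_eq0 (negbTE aneq) /= => /eqP.
have ht2 : `|t| <= 2.
  by rewrite /t (le_trans (ler_normD _ _)) // norm_conjC na.
have adjI m b (i j : 'I_6) : i != j -> ev m t = 0 -> (b || (a != a^*)) -> adjm m b (r i) (r j).
  move=> ij hm hb; have [h1 h2] := hI i j ij.
  rewrite /adjm (okP_sound C _ _ t h1 hm) /=.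
  by case: b hb => //= /h2 h2'; rewrite (okP_sound C _ _ t h2' hm).
have GG m b : (m, b) \in Mg -> goodgraph m b by move=> pM; exact: (allP graphs_ok _ pM).
have [aeq|aneq] := eqVneq a a^*.
  have a2 : (a - 1) * (a + 1) = 0.
    by rewrite -subr_sqr expr2 expr1n {2}aeq aa subrr.
  move/eqP: a2; rewrite mulf_eq0 => /orP[] /eqP ha.
    have hm : ev (Zneg 2, Zpos 1, Z0) t = 0.
      rewrite /ev /= zC0 zC1 mul0r addr0 mul1r /t -aeq.
      have -> : a = 1 by apply/eqP; rewrite -subr_eq0 ha.
      by rewrite zCneg /= addrC subrr.
    apply: (final _ _ r (GG (Zneg 2, Zpos 1, Z0) true isT) rA) => i j ij.
    exact: (adjI _ _ i j ij hm).
  have hm : ev (Zpos 2, Zpos 1, Z0) t = 0.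
    rewrite /ev /= zC0 zC1 mul0r addr0 mul1r /t -aeq.
    have -> : a = -1 by apply/eqP; rewrite -subr_eq0 opprK ha.
    by rewrite zCpos /= -opprD subrr.
  apply: (final _ _ r (GG (Zpos 2, Zpos 1, Z0) true isT) rA) => i j ij.
  exact: (adjI _ _ i j ij hm).
pose nt i j := ~~ (triv (coefs pairI (r i) (r j)) && triv (coefs pairII (r i) (r j))).
case: (boolP [exists i, exists j, (i != j) && nt i j]) => [/existsP[i /existsP[j /andP[ij ntij]]]|none].
  have hc : cert (coefs pairI (r i) (r j)) (coefs pairII (r i) (r j)).
    by have := certall_ok; rewrite /certall => /allP /(_ _ (rA i)) /allP /(_ _ (rA j)).
  have [h1 h2] := hI i j ij.
  have [m mML hm] := cert_sound C _ _ t hc ntij h1 (h2 aneq).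
  move: mML; rewrite mem_cat => /orP[/mapP[[m' b'] pM /= em]|mMb]; last by case: (Mb_false C t m ht2 mMb hm).
  rewrite em in hm.
  apply: (final _ _ r (GG m' b' pM) rA) => i' j' ij'.
  by apply: adjI => //; rewrite aneq orbT.
apply: (final _ _ r (GG (Z0, Zpos 1, Z0) false isT) rA) => i j ij.
have := none; rewrite negb_exists => /forallP /(_ i); rewrite negb_exists => /forallP /(_ j).
rewrite ij /= /nt negbK => /andP[t1 t2].
by rewrite /adjm !triv_ok.
Qed.
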